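(* There is no automorphism $\varphi$ of $E$ of type 4 such that, for some basis $\{e_n\}_{n\in\mathbb{N}}$ of $L$, $\varphi(e_n)=-e_n+b_n$ for every $n\in\mathbb{N}$, where each $b_n$ is a nonzero scalar multiple of a monomial $e_{i_1}\cdots e_{i_m}$ in the generators.
   Context: $F$ is a field of characteristic zero, $L$ an infinite-dimensional $F$-vector space, $E$ its Grassmann algebra; for a basis $\{e_n\}$ of $L$, $E$ has basis $1$ and the monomials $e_{i_1}\cdots e_{i_m}$, $i_1<\cdots<i_m$, with $e_ie_j=-e_je_i$. An automorphism $\varphi$ of $E$ with $\varphi^2=\mathrm{id}$ is of type 4 if for every basis $\gamma$ of $L$ the set $\{n\mid \varphi(\gamma_n)=\pm\gamma_n\}$ is empty, i.e. no element $v$ of any basis $\gamma$ of $L$ satisfies $\varphi(v)=v$ or $\varphi(v)=-v$. *)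

(* Defs.v *)
(* The Grassmann algebra E of the vector space L
   with basis g_0, g_1, ... is modelled as {malg F[{fset nat}]}: the basis element
   indexed by the finite set S = {i_1 < ... < i_m} is the monomial g_{i_1}...g_{i_m}
   (S = fset0 gives 1), with the anticommutative product defined below. *)
From HB Require Import structures.
From mathcomp Require Import all_boot all_order all_algebra.
From mathcomp Require Import finmap.
From mathcomp.multinomials Require Import monalg.
Set Implicit Arguments.
Unset Strict Implicit.
Unset Printing Implicit Defensive.
Import GRing.Theory.
Local Open Scope fset_scope.
Local Open Scope ring_scope.

Section Grassmann.
Variable F : fieldType.

Definition Grass := {malg F[{fset nat}]}.

(* number of inversions when concatenating the increasing words S and T *)
Definition ginv (S T : {fset nat}) : nat :=
  sumn [seq count (fun t => t < s)%N (enum_fset T) | s <- enum_fset S].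

Definition gmul (a b : Grass) : Grass :=
  \sum_(S <- msupp a) \sum_(T <- msupp b)
     (if S `&` T == fset0
      then ((-1) ^+ ginv S T * a@_S * b@_T) *: << S `|` T >>
      else 0).

Definition gone : Grass := << fset0 >>.

Definition ggen (i : nat) : Grass := << [fset i] >>.

Definition inL (v : Grass) : Prop :=
  exists (s : seq nat) (c : nat -> F), v = \sum_(i <- s) c i *: ggen i.

Definition is_basisL (g : nat -> Grass) : Prop :=
  [/\ forall n, inL (g n),
      (forall (s : seq nat) (c : nat -> F), uniq s ->
         \sum_(i <- s) c i *: g i = 0 -> forall i, i \in s -> c i = 0) &
      (forall v, inL v ->
         exists (s : seq nat) (c : nat -> F), v = \sum_(i <- s) c i *: g i)].

Definition is_autE (phi : Grass -> Grass) : Prop :=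
  [/\ forall (c : F) (a b : Grass), phi (c *: a + b) = c *: phi a + phi b,
      phi gone = gone,
      forall a b, phi (gmul a b) = gmul (phi a) (phi b) &
      bijective phi].

Definition type4 (phi : Grass -> Grass) : Prop :=
  [/\ is_autE phi,
      forall a, phi (phi a) = a &
      forall g : nat -> Grass, is_basisL g ->
        forall n, phi (g n) <> g n /\ phi (g n) <> - g n].

Definition gmonom (e : nat -> Grass) (s : seq nat) : Grass :=
  foldr (fun i acc => gmul (e i) acc) gone s.

End Grassmann.

(* Main.v *)
Require Import Defs.
From HB Require Import structures.
From mathcomp Require Import all_boot all_order all_algebra.
From mathcomp Require Import finmap.
From mathcomp.multinomials Require Import monalg.
From mathcomp Require Import ring zify.
Import GRing.Theory.
Local Open Scope fset_scope.
Local Open Scope ring_scope.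
From Stdlib Require Import ClassicalEpsilon Classical.

Section G.
Variable F : fieldType.
Local Notation G := (Grass F).
Implicit Types (a b c y z : G) (S T U : {fset nat}).

Definition mm S T : G :=
  if S `&` T == fset0 then (-1) ^+ ginv S T *: << S `|` T >> else 0.
Definition bil (a b : G) : G :=
  \sum_(S <- msupp a) \sum_(T <- msupp b) (a@_S * b@_T) *: mm S T.

Fact gm_key : unit. Proof. by []. Qed.
Definition gm (a b : G) : G := locked_with gm_key (gmul a b).
Lemma gmE a b : gmul a b = gm a b.
Proof. by rewrite /gm unlock. Qed.

Lemma gmulE a b : gm a b = bil a b.
Proof.
rewrite /gm unlock /gmul /bil; apply: eq_bigr => S _; apply: eq_bigr => T _.
rewrite /mm; case: ifP => _; last by rewrite scaler0.
by rewrite scalerA; congr (_ *: _); ring.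
Qed.

Lemma bilw d1 d2 a b : msupp a `<=` d1 -> msupp b `<=` d2 ->
  bil a b = \sum_(S <- d1) \sum_(T <- d2) (a@_S * b@_T) *: mm S T.
Proof.
move=> h1 h2; rewrite /bil (big_fset_incl _ h1); last first.
  by move=> S _ /mcoeff_outdom ->; rewrite big1 // => T _; rewrite mul0r scale0r.
apply: eq_bigr => S _; apply: (big_fset_incl _ h2) => T _ /mcoeff_outdom ->.
by rewrite mulr0 scale0r.
Qed.

Lemma gmulDl a a' b : gm (a + a') b = gm a b + gm a' b.
Proof.
rewrite !gmulE (@bilw (msupp a `|` msupp a') (msupp b) _ _) ?msuppD_le ?fsubset_refl //.
rewrite (@bilw (msupp a `|` msupp a') (msupp b) _ _) ?fsubsetUl ?fsubset_refl //.
rewrite (@bilw (msupp a `|` msupp a') (msupp b) _ _) ?fsubsetUr ?fsubset_refl //.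
rewrite -big_split; apply: eq_bigr => S _; rewrite -big_split; apply: eq_bigr => T _.
by rewrite mcoeffD mulrDl scalerDl.
Qed.

Lemma gmulDr a b b' : gm a (b + b') = gm a b + gm a b'.
Proof.
rewrite !gmulE (@bilw (msupp a) (msupp b `|` msupp b') _ _) ?msuppD_le ?fsubset_refl //.
rewrite (@bilw (msupp a) (msupp b `|` msupp b') _ _) ?fsubsetUl ?fsubset_refl //.
rewrite (@bilw (msupp a) (msupp b `|` msupp b') _ _) ?fsubsetUr ?fsubset_refl //.
rewrite -big_split; apply: eq_bigr => S _; rewrite -big_split; apply: eq_bigr => T _.
by rewrite mcoeffD mulrDr scalerDl.
Qed.

Lemma gmulZl k a b : gm (k *: a) b = k *: gm a b.
Proof.
rewrite !gmulE (@bilw (msupp a) (msupp b) _ _) ?msuppZ_le ?fsubset_refl //.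
rewrite /bil scaler_sumr; apply: eq_bigr => S _; rewrite scaler_sumr.
by apply: eq_bigr => T _; rewrite mcoeffZ scalerA mulrA.
Qed.

Lemma gmulZr k a b : gm a (k *: b) = k *: gm a b.
Proof.
rewrite !gmulE (@bilw (msupp a) (msupp b) _ _) ?msuppZ_le ?fsubset_refl //.
rewrite /bil scaler_sumr; apply: eq_bigr => S _; rewrite scaler_sumr.
by apply: eq_bigr => T _; rewrite mcoeffZ !scalerA mulrCA.
Qed.

Lemma gmul0l b : gm 0 b = 0.
Proof. by have := gmulZl 0 0 b; rewrite !scale0r. Qed.
Lemma gmul0r a : gm a 0 = 0.
Proof. by have := gmulZr 0 a 0; rewrite !scale0r. Qed.
Lemma gmulNl a b : gm (- a) b = - gm a b.
Proof. by rewrite -scaleN1r gmulZl scaleN1r. Qed.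
Lemma gmulNr a b : gm a (- b) = - gm a b.
Proof. by rewrite -scaleN1r gmulZr scaleN1r. Qed.
Lemma gmulBl a a' b : gm (a - a') b = gm a b - gm a' b.
Proof. by rewrite gmulDl gmulNl. Qed.
Lemma gmulBr a b b' : gm a (b - b') = gm a b - gm a b'.
Proof. by rewrite gmulDr gmulNr. Qed.

Lemma gmul_suml (I : Type) (r : seq I) (P : pred I) (f : I -> G) b :
  gm (\sum_(i <- r | P i) f i) b = \sum_(i <- r | P i) gm (f i) b.
Proof. exact: (big_morph (fun x => gm x b) (fun x y => gmulDl x y b) (gmul0l b)). Qed.
Lemma gmul_sumr (I : Type) (r : seq I) (P : pred I) (f : I -> G) a :
  gm a (\sum_(i <- r | P i) f i) = \sum_(i <- r | P i) gm a (f i).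
Proof. exact: (big_morph (fun x => gm a x) (fun x y => gmulDr a x y) (gmul0r a)). Qed.

Lemma scaleU k S : k *: << S >> = << k *g S >> :> G.
Proof. by apply/malgP => U; rewrite mcoeffZ !mcoeffU mulr_natr. Qed.

Lemma gexpand a : a = \sum_(S <- msupp a) a@_S *: << S >>.
Proof. by rewrite {1}(monalgE a); apply: eq_bigr => S _; rewrite scaleU. Qed.

Lemma msuppU1' S : msupp (<< S >> : G) = [fset S].
Proof. by rewrite msuppU oner_eq0. Qed.

Lemma gmulUU S T : gm << S >> << T >> = mm S T.
Proof.
by rewrite gmulE /bil !msuppU1' !big_seq_fset1 !mcoeffUU mul1r scale1r.
Qed.

Definition lin (h : {fset nat} -> G) (a : G) : G :=
  \sum_(S <- msupp a) a@_S *: h S.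

Lemma linw h d a : msupp a `<=` d -> lin h a = \sum_(S <- d) a@_S *: h S.
Proof.
move=> hd; rewrite /lin (big_fset_incl _ hd) // => S _ /mcoeff_outdom ->.
by rewrite scale0r.
Qed.

Lemma linD h a b : lin h (a + b) = lin h a + lin h b.
Proof.
rewrite (@linw _ (msupp a `|` msupp b) _) ?msuppD_le //.
rewrite (@linw _ (msupp a `|` msupp b) a) ?fsubsetUl //.
rewrite (@linw _ (msupp a `|` msupp b) b) ?fsubsetUr //.
by rewrite -big_split; apply: eq_bigr => S _; rewrite mcoeffD scalerDl.
Qed.

Lemma linZ h k a : lin h (k *: a) = k *: lin h a.
Proof.
rewrite (@linw _ (msupp a) _) ?msuppZ_le // /lin scaler_sumr.
by apply: eq_bigr => S _; rewrite mcoeffZ scalerA.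
Qed.

Lemma lin0 h : lin h 0 = 0.
Proof. by have := linZ h 0 0; rewrite !scale0r. Qed.

Lemma linU h S : lin h << S >> = h S.
Proof. by rewrite /lin msuppU1' big_seq_fset1 mcoeffUU scale1r. Qed.

Lemma lin_sum h (I : Type) (r : seq I) (P : pred I) (f : I -> G) :
  lin h (\sum_(i <- r | P i) f i) = \sum_(i <- r | P i) lin h (f i).
Proof. exact: (big_morph (lin h) (linD h) (lin0 h)). Qed.

End G.

Section G2.
Variable F : fieldType.
Local Notation G := (Grass F).
Local Notation mm := (@mm F).
Local Notation lin := (@lin F).
Local Notation gm := (@gm F).
Implicit Types (a b c y z : G) (S T U : {fset nat}).

Lemma sumn_mapD (I : Type) (s : seq I) (f g : I -> nat) :
  sumn [seq f x + g x | x <- s] = sumn (map f s) + sumn (map g s).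
Proof. by elim: s => //= x s ->; lia. Qed.

Lemma perm_enumU {S T} : [disjoint S & T]%fset ->
  perm_eq (enum_fset (S `|` T)) (enum_fset S ++ enum_fset T).
Proof.
move=> d; apply: uniq_perm; first exact: fset_uniq.
  rewrite cat_uniq !fset_uniq /= andbT; apply/hasPn => x /= xT.
  by apply/negP => xS; move/fdisjointP: d => /(_ x xS); rewrite xT.
by move=> x; rewrite mem_cat in_fsetU.
Qed.

Lemma ginvUl S T U : [disjoint S & T]%fset -> ginv (S `|` T) U = (ginv S U + ginv T U)%N.
Proof.
by move=> d; rewrite /ginv (perm_sumn (perm_map _ (perm_enumU d))) map_cat sumn_cat.
Qed.

Lemma ginvUr S T U : [disjoint T & U]%fset -> ginv S (T `|` U) = (ginv S T + ginv S U)%N.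
Proof.
move=> d; rewrite /ginv; elim: (enum_fset S) => //= x s ->.
by rewrite (permP (perm_enumU d)) count_cat addnACA.
Qed.

Lemma ginv0l T : ginv fset0 T = 0%N. Proof. by []. Qed.
Lemma ginv0r S : ginv S fset0 = 0%N.
Proof. by rewrite /ginv; elim: (enum_fset S). Qed.

Lemma mmE S T : mm S T = if [disjoint S & T]%fset then (-1) ^+ ginv S T *: << S `|` T >> else 0 :> G.
Proof. by rewrite /mm fsetI_eq0. Qed.

Lemma gassocU S T U : gm (mm S T) << U >> = gm << S >> (mm T U) :> G.
Proof.
rewrite !mmE.
case: (boolP [disjoint S & T]%fset) => dST; case: (boolP [disjoint T & U]%fset) => dTU.
- rewrite gmulZl gmulZr !gmulUU !mmE fdisjointUX fdisjointXU dST dTU /= andbT.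
  case: (boolP [disjoint S & U]%fset) => dSU /=; last by rewrite !scaler0.
  rewrite !scalerA -!exprD fsetUA.
  rewrite (ginvUl _ _ U dST) (ginvUr S _ _ dTU); congr (_ ^+ _ *: _).
  by rewrite [RHS]addnC -addnA.
- by rewrite gmul0r gmulZl gmulUU mmE fdisjointUX (negbTE dTU) andbF scaler0.
- by rewrite gmul0l gmulZr gmulUU mmE fdisjointXU (negbTE dST) scaler0.
- by rewrite gmul0l gmul0r.
Qed.

Lemma gassoc a b c : gm (gm a b) c = gm a (gm b c).
Proof.
have hB : forall S T, gm (gm << S >> << T >>) c = gm << S >> (gm << T >> c).
  move=> S T; rewrite (gexpand _ c) gmul_sumr gmul_sumr.
  rewrite gmul_sumr.
  by apply: eq_bigr => U _; rewrite !gmulZr !gmulUU gassocU.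
have hA : forall S, gm (gm << S >> b) c = gm << S >> (gm b c).
  move=> S; rewrite (gexpand _ b) !gmul_sumr !gmul_suml !gmul_sumr.
  by apply: eq_bigr => T _; rewrite gmulZr gmulZl gmulZl gmulZr hB.
rewrite (gexpand _ a) !gmul_suml.
by apply: eq_bigr => S _; rewrite !gmulZl hA.
Qed.

Lemma gmul1l y : gm (gone F) y = y.
Proof.
rewrite {2}(gexpand _ y) {1}(gexpand _ y) gmul_sumr; apply: eq_bigr => S _.
by rewrite gmulZr /gone gmulUU mmE fdisjoint0X ginv0l expr0 scale1r fset0U.
Qed.

Lemma gmul1r y : gm y (gone F) = y.
Proof.
rewrite {2}(gexpand _ y) {1}(gexpand _ y) gmul_suml; apply: eq_bigr => S _.
by rewrite gmulZl /gone gmulUU mmE fdisjointX0 ginv0r expr0 scale1r fsetU0.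
Qed.

Lemma ggen_anti i j : gm (ggen F i) (ggen F j) = - gm (ggen F j) (ggen F i).
Proof.
rewrite /ggen !gmulUU !mmE !fdisjoint1X !in_fset1.
case: (eqVneq i j) => [->|nij]; first by rewrite /= oppr0.
rewrite /= fsetUC /ginv -!fset_seq1 /= !addn0 -scaleNr; congr (_ *: _).
change ((-1) ^+ (j < i)%N = - (-1) ^+ (i < j)%N :> F).
case: (ltngtP i j) => h /=; first by rewrite expr1 expr0 opprK.
  by rewrite expr1 expr0.
by move: nij; rewrite h eqxx.
Qed.

Lemma L_anti {v w} : inL v -> inL w -> gm v w = - gm w v.
Proof.
move=> [s [c ->]] [t [d ->]].
rewrite !gmul_suml -sumrN; under eq_bigr => i _ do rewrite gmulZl gmul_sumr scaler_sumr.
under [RHS]eq_bigr => j _ do rewrite gmulZl gmul_sumr scaler_sumr -sumrN.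
rewrite exchange_big; apply: eq_bigr => i _; apply: eq_bigr => j _.
by rewrite !gmulZr ggen_anti !scalerN !scalerA mulrC.
Qed.

Lemma L_sq (two : (2%:R : F) != 0) v : inL v -> gm v v = 0.
Proof.
move=> hv; have h := L_anti hv hv.
have : (2%:R : F) *: gm v v = 0 by rewrite scaler_nat mulr2n {1}h addNr.
by move/(congr1 (fun x => (2%:R : F)^-1 *: x)); rewrite scalerA mulVf // scale1r scaler0.
Qed.

End G2.

Fixpoint inv (s : seq nat) : nat :=
  if s is x :: s' then (count (fun y => (y < x)%N) s' + inv s')%N else 0%N.

Lemma inv_cat s t : inv (s ++ t) =
  (inv s + inv t + sumn [seq count (fun y => (y < x)%N) t | x <- s])%N.
Proof. elim: s => [|x s IH] /=; first by rewrite add0n addn0. rewrite IH count_cat; lia. Qed.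

Lemma sorted_all_gt {b u} : sorted ltn (b :: u) -> all (fun x => (b < x)%N) u.
Proof. by move=> h; apply: (order_path_min ltn_trans h). Qed.

Lemma count_lt0 a u : all (fun x => (a <= x)%N) u -> count (fun y => (y < a)%N) u = 0%N.
Proof.
move=> h; apply/eqP; rewrite -leqn0 leqNgt -has_count; apply/hasPn => x xu.
by move/allP: h => /(_ x xu); rewrite -leqNgt.
Qed.

Lemma inv_sorted s : sorted ltn s -> inv s = 0%N.
Proof.
elim: s => //= a s IH hs; rewrite IH ?(path_sorted hs) // addn0 count_lt0 //.
by apply: sub_all (order_path_min ltn_trans hs) => x /ltnW.
Qed.

Section Fam.
Variable F : fieldType.
Hypothesis two : (2%:R : F) != 0.
Variable w : nat -> Grass F.
Hypothesis Hw : forall i, inL (w i).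
Local Notation G := (Grass F).
Local Notation M := (gmonom w).
Local Notation gm := (@gm F).
Implicit Types (a b c y z : G) (S T U : {fset nat}).

Lemma M_cons i s : M (i :: s) = gm (w i) (M s).
Proof. by rewrite /= gmE. Qed.

Lemma w_anti i j y : gm (w i) (gm (w j) y) = - gm (w j) (gm (w i) y).
Proof. by rewrite -!gassoc (L_anti _ (Hw i) (Hw j)) gmulNl. Qed.

Lemma w_sq i y : gm (w i) (gm (w i) y) = 0.
Proof. by rewrite -gassoc (L_sq _ two _ (Hw i)) gmul0l. Qed.

Lemma L1a i u : i \in u -> gm (w i) (M u) = 0.
Proof.
elim: u => // j u IH; rewrite inE M_cons; case/orP => [/eqP->|h].
  by rewrite w_sq.
by rewrite w_anti IH // gmul0r oppr0.
Qed.

Lemma L1b i u : sorted ltn u -> i \notin u ->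
  gm (w i) (M u) = (-1) ^+ count (fun t => (t < i)%N) u *: M (sort leq (i :: u)).
Proof.
elim: u => [|j u IH] hs hi; first by rewrite expr0 scale1r (_ : sort leq [:: i] = [:: i]) // M_cons.
have hall := sorted_all_gt hs.
rewrite inE negb_or in hi; case/andP: hi => hij hiu.
case: (ltngtP i j) => hlt.
- have -> : sort leq [:: i, j & u] = [:: i, j & u].
    apply: sorted_sort; first exact: leq_trans.
    rewrite /= ltnW //=; apply: (sub_path _ hs) => x y /ltnW //.
  rewrite count_lt0 ?expr0 ?scale1r ?M_cons //=.
  rewrite ltnW //=; apply: sub_all hall => x hx; exact: ltnW (ltn_trans hlt hx).
- rewrite M_cons w_anti IH ?(path_sorted hs) // gmulZr /= hlt add1n exprS mulN1r scaleNr -M_cons.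
  congr (- (_ *: M _)); apply: (sorted_eq leq_trans anti_leq).
  + rewrite /= path_sortedE; last exact: leq_trans.
    rewrite sort_sorted ?andbT; last exact: leq_total.
    rewrite all_sort /= (ltnW hlt) /=; apply: sub_all hall => x /ltnW //.
  + exact: (sort_sorted leq_total).
  + rewrite perm_sym perm_sort.
    change (perm_eq ([:: i] ++ [:: j] ++ u) (j :: sort leq (i :: u))).
    rewrite perm_catCA /= perm_cons perm_sym perm_sort; exact: perm_refl.
- by move: hij; rewrite hlt eqxx.
Qed.

Lemma LsortM s : M s = if uniq s then (-1) ^+ inv s *: M (sort leq s) else 0.
Proof.
elim: s => [|i s IH]; first by rewrite /= expr0 scale1r.
rewrite M_cons IH /=; case: (boolP (uniq s)) => us; last by rewrite gmul0r andbF.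
rewrite gmulZr andbT; case: (boolP (i \in s)) => is_ /=.
  by rewrite L1a ?scaler0 // mem_sort.
rewrite L1b; first last.
- by rewrite mem_sort.
- by rewrite ltn_sorted_uniq_leq sort_uniq us sort_sorted //; exact: leq_total.
rewrite scalerA -exprD addnC.
have hp : perm_eq (sort leq s) s by rewrite perm_sort; exact: perm_refl.
rewrite (permP hp); congr (_ *: M _); apply/perm_sortP.
- exact: leq_total.
- exact: leq_trans.
- exact: anti_leq.
by rewrite perm_cons.
Qed.

Lemma L_cat s t : M (s ++ t) = gm (M s) (M t).
Proof.
elim: s => [|i s IH]; first by rewrite /= gmul1l.
by rewrite cat_cons !M_cons IH gassoc.
Qed.

Definition Mon S := M (sort leq (enum_fset S)).

Lemma uniq_ss S T : uniq (sort leq (enum_fset S) ++ sort leq (enum_fset T)) = [disjoint S & T]%fset.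
Proof.
rewrite cat_uniq !sort_uniq !fset_uniq /= andbT fdisjoint_sym.
apply/hasPn/fdisjointP => h x.
  by move=> xT; have := h x; rewrite mem_sort xT mem_sort; apply.
by rewrite !mem_sort => /h.
Qed.

Lemma L2 S T : gm (Mon S) (Mon T) =
  if [disjoint S & T]%fset then (-1) ^+ ginv S T *: Mon (S `|` T) else 0.
Proof.
rewrite /Mon -L_cat LsortM uniq_ss; case: ifP => // d.
rewrite inv_cat !inv_sorted ?add0n; first last.
- by rewrite ltn_sorted_uniq_leq sort_uniq fset_uniq sort_sorted //; exact: leq_total.
- by rewrite ltn_sorted_uniq_leq sort_uniq fset_uniq sort_sorted //; exact: leq_total.
have hpS : perm_eq (sort leq (enum_fset S)) (enum_fset S) by rewrite perm_sort; exact: perm_refl.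
have hpT : perm_eq (sort leq (enum_fset T)) (enum_fset T) by rewrite perm_sort; exact: perm_refl.
congr (_ ^+ _ *: M _).
  rewrite /ginv (perm_sumn (perm_map _ hpS)); congr sumn; apply: eq_map => x.
  by rewrite (permP hpT).
apply/perm_sortP; [exact: leq_total | exact: leq_trans | exact: anti_leq |].
apply: perm_trans (perm_cat hpS hpT) _; rewrite perm_sym perm_enumU //.
Qed.

Definition psi (a : G) : G := lin F Mon a.

Lemma psiD a b : psi (a + b) = psi a + psi b. Proof. exact: linD. Qed.
Lemma psiZ k a : psi (k *: a) = k *: psi a. Proof. exact: linZ. Qed.
Lemma psiU S : psi << S >> = Mon S. Proof. exact: linU. Qed.
Lemma psi0 : psi 0 = 0. Proof. exact: lin0. Qed.
Lemma psiN a : psi (- a) = - psi a. Proof. by rewrite -scaleN1r psiZ scaleN1r. Qed.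

Lemma psi_mm S T : psi (mm F S T) = gm (Mon S) (Mon T).
Proof. by rewrite mmE L2; case: ifP => _; rewrite ?psiZ ?psiU ?psi0. Qed.

Lemma psi_mul a b : psi (gm a b) = gm (psi a) (psi b).
Proof.
rewrite gmulE /bil /psi lin_sum {2 3}/lin gmul_suml; apply: eq_bigr => S _.
rewrite lin_sum gmulZl gmul_sumr scaler_sumr; apply: eq_bigr => T _.
by rewrite linZ gmulZr scalerA -/(psi _) psi_mm.
Qed.

Lemma psi_gone : psi (gone F) = gone F.
Proof. by rewrite /gone psiU. Qed.

Lemma psi_ggen i : psi (ggen F i) = w i.
Proof. by rewrite /ggen psiU /Mon -fset_seq1 /= gmE gmul1r. Qed.

Lemma Mon_seq s : sorted ltn s -> Mon (seq_fset tt s) = M s.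
Proof.
move=> hs; rewrite /Mon; congr M; apply: (sorted_eq leq_trans anti_leq).
- exact: (sort_sorted leq_total).
- by move: hs; rewrite ltn_sorted_uniq_leq => /andP[].
rewrite perm_sort; apply: uniq_perm; first exact: fset_uniq.
  by move: hs; rewrite ltn_sorted_uniq_leq => /andP[].
by move=> x; rewrite seq_fsetE.
Qed.

End Fam.

Section P4.
Variable F : fieldType.
Hypothesis two : (2%:R : F) != 0.
Local Notation G := (Grass F).
Local Notation gm := (@gm F).
Implicit Types (y z : G) (S T U : {fset nat}).
Local Notation psi := (@psi F).
Local Notation Mon := (@Mon F).

Lemma gmonom_cons (w : nat -> G) i s : gmonom w (i :: s) = gm (w i) (gmonom w s).
Proof. by rewrite /= gmE. Qed.

Lemma eq_gmonom (w w' : nat -> G) s : w =1 w' -> gmonom w s = gmonom w' s.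
Proof. move=> h; elim: s => [|i s IH]; first by []. by rewrite !gmonom_cons IH h. Qed.

Lemma map_gmonom (chi : G -> G) :
  (forall a b : G, chi (gm a b) = gm (chi a) (chi b)) -> chi (gone F) = gone F ->
  forall (w : nat -> G) s, chi (gmonom w s) = gmonom (fun i => chi (w i)) s.
Proof.
move=> hm h1 w; elim=> [|i s IH]; first exact: h1.
by rewrite !gmonom_cons hm IH.
Qed.

Lemma psi_sum (w : nat -> G) (I : Type) (r : seq I) (P : pred I) (g : I -> G) :
  psi w (\sum_(i <- r | P i) g i) = \sum_(i <- r | P i) psi w (g i).
Proof. exact: lin_sum. Qed.

Lemma seq_fset_sort S : seq_fset tt (sort leq (enum_fset S)) = S.
Proof. by apply/fsetP => x; rewrite seq_fsetE mem_sort. Qed.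

Lemma sorted_ss S : sorted ltn (sort leq (enum_fset S)).
Proof. by rewrite ltn_sorted_uniq_leq sort_uniq fset_uniq sort_sorted //; exact: leq_total. Qed.

Lemma ginv1_lt0 a S : (forall x, x \in S -> (a < x)%N) -> ginv [fset a] S = 0%N.
Proof.
move=> h; rewrite /ginv -fset_seq1 /= addn0.
apply/eqP; rewrite -leqn0 leqNgt -has_count; apply/hasPn => x hx /=.
change (~~ (x < a)%N); rewrite -leqNgt; exact: ltnW (h x hx).
Qed.

Lemma gmonom_ggen s : sorted ltn s -> gmonom (ggen F) s = << seq_fset tt s >>.
Proof.
elim: s => [|a s IH] hs.
  rewrite (_ : seq_fset tt [::] = fset0); first by [].
  by apply/fsetP => x; rewrite seq_fsetE inE.
have hall := sorted_all_gt hs.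
rewrite gmonom_cons IH ?(path_sorted hs) // /ggen gmulUU mmE fdisjoint1X seq_fsetE.
have -> : a \notin s.
  by apply/negP => ha; move/allP: hall => /(_ a ha); rewrite ltnn.
rewrite ginv1_lt0 ?expr0 ?scale1r; last first.
  by move=> x; rewrite seq_fsetE => hx; move/allP: hall => /(_ x hx).
congr (<< _ >>); apply/fsetP => x; by rewrite in_fsetU in_fset1 !seq_fsetE inE.
Qed.

Lemma sum_regroup (v : nat -> G) (d : nat -> F) s K : uniq K -> {subset s <= K} ->
  \sum_(k <- s) d k *: v k =
  \sum_(k <- K) (\sum_(k' <- s | k' == k) d k') *: v k.
Proof.
move=> uK sK.
under [RHS]eq_bigr => k _ do rewrite scaler_suml.
rewrite (exchange_big_dep xpredT) //=; apply: eq_big_seq => k' hk'.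
rewrite -big_filter (eq_filter (a2 := pred1 k')); last by move=> x; rewrite /= eq_sym.
by rewrite filter_pred1_uniq ?sK // big_seq1.
Qed.

Lemma sum_delta (v : nat -> G) K i : uniq K -> i \in K ->
  \sum_(k <- K) ((k == i)%:R : F) *: v k = v i.
Proof.
move=> uK iK; rewrite (bigD1_seq i) //= eqxx scale1r big1 ?addr0 //.
by move=> k /negbTE ->; rewrite scale0r.
Qed.

Section Basis.
Variable e : nat -> G.
Hypothesis he : is_basisL e.

Lemma He i : inL (e i). Proof. by case: he. Qed.

Lemma ggen_inL l : inL (ggen F l).
Proof. by exists [:: l], (fun _ => 1); rewrite big_seq1 scale1r. Qed.

Lemma span l : exists s (c : nat -> F), ggen F l = \sum_(i <- s) c i *: e i.
Proof. by case: he => _ _; apply; exact: ggen_inL. Qed.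

Definition Rs l : seq nat := proj1_sig (constructive_indefinite_description _ (span l)).
Lemma Rs_spec l : exists c : nat -> F, ggen F l = \sum_(i <- Rs l) c i *: e i.
Proof. exact: (proj2_sig (constructive_indefinite_description _ (span l))). Qed.
Definition Dc l : nat -> F := proj1_sig (constructive_indefinite_description _ (Rs_spec l)).
Lemma Dc_spec l : ggen F l = \sum_(i <- Rs l) Dc l i *: e i.
Proof. exact: (proj2_sig (constructive_indefinite_description _ (Rs_spec l))). Qed.

Definition fb l : G := \sum_(k <- Rs l) Dc l k *: ggen F k.
Lemma fb_inL l : inL (fb l). Proof. by exists (Rs l), (Dc l). Qed.

Lemma psi_lcomb (w : nat -> G) (a : nat -> F) r :
  psi w (\sum_(l <- r) a l *: ggen F l) = \sum_(l <- r) a l *: w l.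
Proof. by rewrite psi_sum; apply: eq_bigr => l _; rewrite psiZ psi_ggen. Qed.

Lemma psi_f_e i : psi fb (e i) = ggen F i.
Proof.
case: (He i) => r [a ea].
set K := undup (i :: flatten [seq Rs l | l <- r]).
have uK : uniq K := undup_uniq _.
have iK : i \in K by rewrite mem_undup inE eqxx.
have subK : forall l, l \in r -> {subset Rs l <= K}.
  move=> l hl x hx; rewrite mem_undup inE; apply/orP; right.
  by apply/flattenP; exists (Rs l) => //; apply: map_f.
pose C k := \sum_(l <- r) a l * \sum_(k' <- Rs l | k' == k) Dc l k'.
have reg : forall v : nat -> G,
    \sum_(l <- r) a l *: (\sum_(k <- Rs l) Dc l k *: v k) = \sum_(k <- K) C k *: v k.
  move=> v; rewrite big_seq.
  under eq_bigr => l hl do rewrite (sum_regroup v (Dc l) _ _ uK (subK l hl)) scaler_sumr.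
  rewrite -big_seq exchange_big; apply: eq_bigr => k _.
  by rewrite /C scaler_suml; apply: eq_bigr => l _; rewrite scalerA.
have eC : e i = \sum_(k <- K) C k *: e k.
  rewrite -reg {1}ea; apply: eq_bigr => l _; by rewrite [ggen F l]Dc_spec.
have Cd : forall k, k \in K -> C k = (k == i)%:R.
  have h0 : \sum_(k <- K) (C k - (k == i)%:R) *: e k = 0.
    under eq_bigr => k _ do rewrite scalerBl.
    by rewrite sumrB sum_delta // -eC subrr.
  move=> k hk; apply/eqP; rewrite -subr_eq0; apply/eqP.
  by case: he => _ hind _; apply: (hind K (fun k => C k - (k == i)%:R) uK h0 k hk).
rewrite ea psi_lcomb /fb reg big_seq.
under eq_bigr => k hk do rewrite Cd //.
by rewrite -big_seq sum_delta.
Qed.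

Lemma psi_inj (a : G) : psi fb (psi e a) = a.
Proof.
have hS : forall S, psi fb (Mon e S) = << S >>.
  move=> S; rewrite /Mon (map_gmonom (psi fb) (psi_mul _ two _ fb_inL) (psi_gone _ fb)).
  rewrite (eq_gmonom _ (ggen F) _ psi_f_e).
  by rewrite gmonom_ggen ?sorted_ss // seq_fset_sort.
have -> : psi e a = \sum_(S <- msupp a) a@_S *: Mon e S by [].
rewrite psi_sum [RHS]gexpand; apply: eq_bigr => S _; by rewrite psiZ hS.
Qed.

Lemma psi_e_inj (a b : G) : psi e a = psi e b -> a = b.
Proof. by move=> h; rewrite -(psi_inj a) h psi_inj. Qed.

End Basis.
End P4.

Section P5.
Variable F : fieldType.
Hypothesis two : (2%:R : F) != 0.
Local Notation G := (Grass F).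
Local Notation gm := (@gm F).
Local Notation mm := (@mm F).
Implicit Types (y z : G) (A B S T U : {fset nat}).

Lemma coefmm A B U : (mm A B)@_U =
  if [disjoint A & B]%fset && (A `|` B == U) then (-1) ^+ ginv A B else 0.
Proof.
rewrite mmE; case: ifP => d /=; last by rewrite mcoeff0.
by rewrite mcoeffZ mcoeffU; case: (A `|` B == U); rewrite ?mulr1n ?mulr0n ?mulr1 ?mulr0.
Qed.

Lemma card_disj A B : [disjoint A & B]%fset -> #|` A `|` B| = (#|` A| + #|` B|)%N.
Proof.
move=> d; rewrite -cardfsUI; move: d; rewrite -fsetI_eq0 => /eqP ->.
by rewrite cardfs0 addn0.
Qed.

Lemma coefmm_card A B U : (#|` A| + #|` B|)%N != #|` U| -> (mm A B)@_U = 0.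
Proof.
move=> h; rewrite coefmm; case: ifP => // /andP [d /eqP hU].
by move: h; rewrite -hU card_disj // eqxx.
Qed.

Lemma mcoeff_sumG (I : Type) (r : seq I) (P : pred I) (f : I -> G) U :
  (\sum_(i <- r | P i) f i)@_U = \sum_(i <- r | P i) (f i)@_U.
Proof. exact: raddf_sum. Qed.

Definition low (d : nat) y := forall U, (#|` U| < d)%N -> y@_U = 0.

Lemma lowD d y z : low d y -> low d z -> low d (y + z).
Proof. by move=> hy hz U hU; rewrite mcoeffD hy // hz // addr0. Qed.
Lemma lowZ d k y : low d y -> low d (k *: y).
Proof. by move=> hy U hU; rewrite mcoeffZ hy // mulr0. Qed.
Lemma lowN d y : low d y -> low d (- y).
Proof. by move=> hy U hU; rewrite mcoeffN hy // oppr0. Qed.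
Lemma lowW d d' y : (d' <= d)%N -> low d y -> low d' y.
Proof. by move=> hd hy U hU; apply: hy; apply: leq_trans hU hd. Qed.
Lemma lowU S : low #|` S| << S >>.
Proof.
move=> U hU; rewrite mcoeffU; case: eqP => [hSU|]; last by rewrite mulr0n.
by move: hU; rewrite hSU ltnn.
Qed.

Lemma low_mul p q y z : low p y -> low q z -> low (p + q) (gm y z).
Proof.
move=> hy hz U hU; rewrite gmulE /bil mcoeff_sumG big1 // => S _.
rewrite mcoeff_sumG big1 // => T _; rewrite mcoeffZ.
case: (ltnP #|` S| p) => hS; first by rewrite hy // mul0r mul0r.
case: (ltnP #|` T| q) => hT; first by rewrite (hz T) // mulr0 mul0r.
rewrite coefmm_card ?mulr0 //; apply/eqP => h; move: hU; rewrite -h.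
by rewrite ltnNge leq_add.
Qed.

Lemma seq_fset_nil : seq_fset tt ([::] : seq nat) = fset0.
Proof. by apply/fsetP => x; rewrite seq_fsetE inE. Qed.

Lemma seq_fset1' (j : nat) : seq_fset tt [:: j] = [fset j].
Proof. by apply/fsetP => x; rewrite seq_fsetE !inE. Qed.

Lemma card_seq_fset {t : seq nat} : uniq t -> #|` seq_fset tt t| = size t.
Proof. by move=> u; rewrite size_seq_fset undup_id. Qed.

Lemma sorted_uniq' {t : seq nat} : sorted ltn t -> uniq t.
Proof. by rewrite ltn_sorted_uniq_leq => /andP[]. Qed.

Section GW.
Variables (c : nat -> F) (s : nat -> seq nat).
Hypothesis hc : forall n, c n != 0.
Hypothesis hs : forall n, sorted ltn (s n).
Hypothesis hne : forall n, s n != [::].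
Definition Sf n := seq_fset tt (s n).
Definition X n : G := - ggen F n + c n *: << Sf n >>.
Hypothesis H1 : forall n, gmonom X (s n) = << Sf n >>.
Hypothesis H2 : forall n k, gm (X n) (X k) + gm (X k) (X n) = 0.

Lemma card_Sf n : #|` Sf n| = size (s n).
Proof. exact: card_seq_fset (sorted_uniq' (hs n)). Qed.

Lemma case1 : (exists n, size (s n) = 1%N) -> exists j, X j = ggen F j.
Proof.
move=> [n hn]; have := H1 n; rewrite /Sf.
case E: (s n) hn => [|j [|? ?]] // _.
rewrite gmonom_cons (_ : gmonom X [::] = gone F) // gmul1r seq_fset1' => hX.
by exists j; rewrite hX.
Qed.

Lemma expansion t : sorted ltn t -> (forall i, i \in t -> (2 <= size (s i))%N) ->
  low (size t).+1 (gmonom X t - (-1) ^+ (size t) *: << seq_fset tt t >>).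
Proof.
elim: t => [|a t IH] ht hsz.
  rewrite seq_fset_nil expr0 scale1r.
  have -> : gmonom X [::] = << fset0 >> by [].
  by rewrite subrr => U _; rewrite mcoeff0.
set T := seq_fset tt t.
have ht' := path_sorted ht.
have hr := IH ht' (fun i hi => hsz i ltac:(by rewrite inE hi orbT)).
set r := gmonom X t - _ in hr.
have e1 : gmonom X t = (-1) ^+ size t *: << T >> + r by rewrite /r addrC subrK.
have hg : gm (ggen F a) << T >> = << seq_fset tt (a :: t) >>.
  by rewrite -gmonom_ggen // gmonom_cons gmonom_ggen.
have -> : gmonom X (a :: t) - (-1) ^+ size (a :: t) *: << seq_fset tt (a :: t) >> =
    ((-1) ^+ size t * c a) *: gm << Sf a >> << T >> + gm (X a) r.
  rewrite gmonom_cons e1 gmulDr {1}/X gmulZr gmulDl gmulNl gmulZl hg /= exprS mulN1r.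
  rewrite scalerDr scalerN scalerA scaleNr opprK.
  by rewrite [LHS]addrC addrA addrA addrN add0r.
apply: lowD.
  apply: lowZ; apply: (@lowW (2 + size t)%N); first by rewrite /= add2n.
  apply: low_mul; last by rewrite -(card_seq_fset (sorted_uniq' ht')); exact: lowU.
  apply: (@lowW #|` Sf a|); first by rewrite card_Sf hsz // mem_head.
  exact: lowU.
apply: (@lowW (1 + (size t).+1)%N); first by rewrite add1n.
apply: low_mul => //.
rewrite /X; apply: lowD; first by apply: lowN; rewrite /ggen; move: (lowU [fset a]); rewrite cardfs1.
apply: lowZ; apply: (@lowW #|` Sf a|); first by rewrite card_Sf ltnW // hsz // mem_head.
exact: lowU.
Qed.

Lemma even_size n : (forall i, (2 <= size (s i))%N) -> ~~ odd (size (s n)).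
Proof.
move=> h2; have := @expansion (s n) (hs n) (fun i _ => h2 i).
rewrite H1 => /(_ (Sf n)); rewrite -/(Sf n) card_Sf ltnSn => /(_ isT).
rewrite mcoeffB mcoeffZ mcoeffUU mulr1 -signr_odd.
case: (odd (size (s n))) => //; rewrite expr1 opprK => /eqP.
by rewrite -mulr2n -mulr_natl mulr1 (negbTE two).
Qed.

Lemma ginv_S1_gt S k : (forall x, x \in S -> (x < k)%N) -> ginv S [fset k] = 0%N.
Proof.
move=> h; rewrite /ginv -fset_seq1.
have : all (fun x => (x < k)%N) (enum_fset S) by apply/allP => x hx; exact: h.
elim: (enum_fset S) => [|x l IH] //= /andP [hx hl].
rewrite addn0 IH // addn0; apply/eqP; rewrite eqb0.
change (~~ (k < x)%N); by rewrite -leqNgt ltnW.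
Qed.

Lemma keyexp_gen (V : lmodType F) (f : V -> V -> V) (phi : V -> F)
  (fDl : forall a b c, f (a + b) c = f a c + f b c)
  (fDr : forall a b c, f a (b + c) = f a b + f a c)
  (fZl : forall k a b, f (k *: a) b = k *: f a b)
  (fZr : forall k a b, f a (k *: b) = k *: f a b)
  (phiD : forall a b, phi (a + b) = phi a + phi b)
  (phiZ : forall k a, phi (k *: a) = k * phi a)
  (gn gk pn pk : V) (cn ck : F) :
  phi (f (- gn + cn *: pn) (- gk + ck *: pk) + f (- gk + ck *: pk) (- gn + cn *: pn)) =
  phi (f gn gk) + phi (f gk gn) - ck * (phi (f gn pk) + phi (f pk gn))
  - cn * (phi (f pn gk) + phi (f gk pn)) + cn * ck * (phi (f pn pk) + phi (f pk pn)).
Proof.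
have fNl : forall a b, f (- a) b = - f a b.
  by move=> a b; rewrite -scaleN1r fZl scaleN1r.
have fNr : forall a b, f a (- b) = - f a b.
  by move=> a b; rewrite -scaleN1r fZr scaleN1r.
have phiN : forall a, phi (- a) = - phi a.
  by move=> a; rewrite -scaleN1r phiZ mulN1r.
rewrite !fDl !fDr !fNl !fNr !fZl !fZr ?opprK !phiD ?phiN ?phiZ ?phiN ?phiZ ?phiN.
ring.
Qed.

Lemma fin_arith {a1 a2 b1 b2 d1 d2 e1 e2 cn ck : F} :
  a1 = 0 -> a2 = 0 -> b1 = 0 -> b2 = 0 -> d1 = 1 -> d2 = 1 -> e1 = 0 -> e2 = 0 ->
  a1 + a2 - ck * (b1 + b2) - cn * (d1 + d2) + cn * ck * (e1 + e2) = 0 -> cn = 0.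
Proof.
move=> -> -> -> -> -> -> -> -> /eqP.
rewrite !(mulr0, addr0, add0r, oppr0, sub0r) oppr_eq0 -mulr2n -mulr_natr mulf_eq0.
by rewrite mul1r (negbTE two) orbF => /eqP.
Qed.

Lemma pair_contra n k : (forall x, x \in Sf n -> (x < k)%N) -> ~~ odd (size (s n)) ->
  (2 <= size (s n))%N -> (2 <= size (s k))%N ->
  ~~ [disjoint [fset n] & Sf k]%fset || ([fset n] `|` Sf k != Sf n `|` [fset k]) -> False.
Proof.
move=> hk hev hn2 hk2 hmid.
have kn : k \notin Sf n by apply/negP => /hk; rewrite ltnn.
set U := Sf n `|` [fset k].
have cU : #|` U| = (size (s n)).+1.
  by rewrite /U card_disj ?fdisjointX1 // cardfs1 card_Sf addn1.
have z1 : (gm (ggen F n) (ggen F k))@_U = 0.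
  rewrite /ggen gmulUU; apply: coefmm_card; rewrite !cardfs1 cU; apply/negP => /eqP hh; move: hn2; lia.
have z2 : (gm (ggen F k) (ggen F n))@_U = 0.
  rewrite /ggen gmulUU; apply: coefmm_card; rewrite !cardfs1 cU; apply/negP => /eqP hh; move: hn2; lia.
have z3 : (gm << Sf n >> << Sf k >>)@_U = 0.
  rewrite gmulUU; apply: coefmm_card; rewrite !card_Sf cU; apply/negP => /eqP hh.
  by move: hk2; lia.
have z4 : (gm << Sf k >> << Sf n >>)@_U = 0.
  rewrite gmulUU; apply: coefmm_card; rewrite !card_Sf cU; apply/negP => /eqP hh.
  by move: hk2; lia.
have z5 : (gm (ggen F n) << Sf k >>)@_U = 0.
  rewrite /ggen gmulUU coefmm; case/orP: hmid => hm; first by rewrite (negbTE hm).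
  by rewrite (negbTE hm) andbF.
have z6 : (gm << Sf k >> (ggen F n))@_U = 0.
  rewrite /ggen gmulUU coefmm fdisjoint_sym fsetUC; case/orP: hmid => hm; first by rewrite (negbTE hm).
  by rewrite (negbTE hm) andbF.
have o1 : (gm << Sf n >> (ggen F k))@_U = 1.
  rewrite /ggen gmulUU coefmm fdisjointX1 kn eqxx /=.
  by rewrite ginv_S1_gt // expr0.
have o2 : (gm (ggen F k) << Sf n >>)@_U = 1.
  rewrite /ggen gmulUU coefmm fdisjoint1X kn fsetUC eqxx /=.
  have -> : ginv [fset k] (Sf n) = size (s n).
    rewrite /ginv -fset_seq1 /= addn0 -card_Sf.
    apply/eqP; rewrite -all_count; apply/allP => x hx; exact: hk.
  by rewrite -signr_odd (negbTE hev) expr0.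
have E := keyexp_gen _ _ _ (@gmulDl F) (@gmulDr F) (@gmulZl F) (@gmulZr F)
  (fun a b => mcoeffD U a b) (fun k a => mcoeffZ k a U)
  (ggen F n) (ggen F k) (<< Sf n >>) (<< Sf k >>) (c n) (c k).
have h := etrans (esym E) (etrans (congr1 (mcoeff U) (H2 n k)) (mcoeff0 U)).
have := fin_arith z1 z2 z5 z6 o1 o2 z3 z4 h.
by move/eqP; rewrite (negbTE (hc n)).
Qed.

Theorem gworld : exists j, X j = ggen F j.
Proof.
case: (classic (exists n, size (s n) = 1%N)) => [h|h]; first exact: case1 h.
have h2 : forall i, (2 <= size (s i))%N.
  move=> i; case E: (s i) => [|x [|y l]] //=.
    by move: (hne i); rewrite E.
  by exfalso; apply: h; exists i; rewrite E.
have hev := fun n => even_size n h2.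
exfalso.
have [j [j0 jS0]] : exists j, j != 0%N /\ j \in s 0%N.
  move: (hs 0%N) (h2 0%N); case: (s 0%N) => [|x [|y l]] //= hs0 _.
  have hxy : x != y by move: hs0 => /andP [hlt _]; rewrite neq_ltn hlt.
  case: (eqVneq x 0%N) => [x0|x0].
    by exists y; split; [rewrite -x0 eq_sym | rewrite !inE eqxx orbT].
  by exists x; split; [| rewrite mem_head].
set k := (\max_(x <- s 0%N ++ s j) x).+1.
have hkle : forall x, x \in s 0%N ++ s j -> (x < k)%N.
  by move=> x hx; rewrite ltnS; exact: (leq_bigmax_seq (F := fun x => x) x hx isT).
have hk0 : forall x, x \in Sf 0%N -> (x < k)%N.
  by move=> x; rewrite seq_fsetE => hx; apply: hkle; rewrite mem_cat hx.
have hkj : forall x, x \in Sf j -> (x < k)%N.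
  by move=> x; rewrite seq_fsetE => hx; apply: hkle; rewrite mem_cat hx orbT.
have jk : j \in Sf k.
  apply/idPn => njk; apply: (@pair_contra 0%N k hk0 (hev 0%N) (h2 0%N) (h2 k)); apply/orP; right.
  apply/negP => /eqP hE.
  have : j \in Sf 0%N `|` [fset k] by rewrite in_fsetU seq_fsetE jS0.
  by rewrite -hE in_fsetU in_fset1 (negbTE j0) (negbTE njk).
apply: (@pair_contra j k hkj (hev j) (h2 j) (h2 k)); apply/orP; left.
by rewrite fdisjoint1X jk.
Qed.

End GW.
End P5.

Local Close Scope fset_scope.

Theorem mainTheorem11 (F : fieldType) (charF0 : [pchar F] =i pred0) :
  ~ exists phi : Grass F -> Grass F,
      type4 phi /\
      exists e : nat -> Grass F,
        is_basisL e /\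
        forall n : nat, exists (c : F) (s : seq nat),
          [/\ c != 0, s != [::], sorted ltn s &
              phi (e n) = - e n + c *: gmonom e s].
Proof.
move=> [phi [[haut hinv hbas] [e [he hn]]]].
have two : (2%:R : F) != 0.
  by move: (charF0 2); rewrite !inE /= => /negbT.
case: haut => hlin hone hmul _.
have phi0 : phi 0 = 0.
  have := hlin 1 0 0; rewrite !scale1r addr0 => h.
  by apply: (addrI (phi 0)); rewrite addr0 -h.
have phiD : forall a b, phi (a + b) = phi a + phi b.
  by move=> a b; rewrite -[a in LHS]scale1r hlin scale1r.
have phiZ : forall k a, phi (k *: a) = k *: phi a.
  by move=> k a; rewrite -[k *: a]addr0 hlin phi0 addr0.
have phiN : forall a, phi (- a) = - phi a.
  by move=> a; rewrite -scaleN1r phiZ scaleN1r.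
have phim : forall a b, phi (gm F a b) = gm F (phi a) (phi b).
  by move=> a b; rewrite -!gmE hmul.
pose cs n := constructive_indefinite_description _ (hn n).
pose c n := proj1_sig (cs n).
have hs' : forall n, exists s : seq nat, [/\ c n != 0, s != [::], sorted ltn s &
              phi (e n) = - e n + c n *: gmonom e s] := fun n => proj2_sig (cs n).
pose s n := proj1_sig (constructive_indefinite_description _ (hs' n)).
have hspec : forall n, [/\ c n != 0, s n != [::], sorted ltn (s n) &
              phi (e n) = - e n + c n *: gmonom e (s n)].
  by move=> n; exact: (proj2_sig (constructive_indefinite_description _ (hs' n))).
have hc : forall n, c n != 0 by move=> n; case: (hspec n).
have hne : forall n, s n != [::] by move=> n; case: (hspec n).
have hss : forall n, sorted ltn (s n) by move=> n; case: (hspec n).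
have hphi : forall n, phi (e n) = - e n + c n *: gmonom e (s n) by move=> n; case: (hspec n).
have hX : forall n, psi F e (X F c s n) = phi (e n).
  move=> n; rewrite hphi /X psiD psiN psiZ psi_ggen psiU /Sf Mon_seq //.
have inj := psi_e_inj F two e he.
have psim := psi_mul F two e (He F e he).
have H2 : forall n k, gm F (X F c s n) (X F c s k) + gm F (X F c s k) (X F c s n) = 0.
  move=> n k; apply: inj.
  have E1 := etrans (psim (X F c s n) (X F c s k)) (congr2 (gm F) (hX n) (hX k)).
  have E2 := etrans (psim (X F c s k) (X F c s n)) (congr2 (gm F) (hX k) (hX n)).
  apply: etrans (psiD _ _ _ _) _; apply: etrans (congr2 +%R E1 E2) _.
  rewrite psi0 -!phim -phiD.
  by rewrite (L_anti F (He F e he n) (He F e he k)) addNr phi0.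
have H1 : forall n, gmonom (X F c s) (s n) = << Sf s n >>.
  move=> n.
  have h1 : phi (gmonom e (s n)) = psi F e (gmonom (X F c s) (s n)).
    rewrite (map_gmonom F phi phim hone) (map_gmonom F (psi F e) psim (psi_gone F e)).
    by apply: eq_gmonom => i; rewrite hX.
  have key : ggen F n = - X F c s n + c n *: gmonom (X F c s) (s n).
    apply: inj; transitivity (e n); first exact: psi_ggen.
    have hY := hX n; have hphin := hphi n; have hinvn := hinv (e n).
    move: hY h1; move: (X F c s n) (gmonom (X F c s) (s n)) => Y G hY h1.
    rewrite psiD psiN psiZ hY -h1.
    by rewrite -phiZ -phiN -phiD -hphin hinvn.
  have h4 : c n *: gmonom (X F c s) (s n) = c n *: << Sf s n >>.
    have e1 : c n *: gmonom (X F c s) (s n) = ggen F n + X F c s n.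
      by rewrite key addrC addNKr.
    by rewrite e1 /X addNKr.
  have := congr1 ( *:%R (c n)^-1) h4.
  by rewrite !scalerA mulVf ?hc // !scale1r.
have [j hj] := gworld F two c s hc hss hne H1 H2.
have : phi (e j) = e j by rewrite -hX hj psi_ggen.
by case: (hbas e he j).
Qed.
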